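(* Let $\mathcal{A}$ be a central S-ring over a finite group $G$, and let $m$ be an integer coprime to $|G|$. Then for every basic set $X$ of $\mathcal{A}$, the set $X^{(m)}=\{x^m : x\in X\}$ is again a basic set of $\mathcal{A}$ (so $\sigma_m(\mathcal{A})=\mathcal{A}$). Moreover, the $\mathbb{Z}$-linear map $\mathcal{A}\to\mathcal{A}$ determined by $\underline{X}\mapsto\underline{X^{(m)}}$ for all basic sets $X$ is a ring automorphism of $\mathcal{A}$.
   Context: For a finite group $G$ with identity $e$ and $X\subseteq G$, write $\underline{X}=\sum_{x\in X}x\in\mathbb{Z}G$. A subring $\mathcal{A}$ of the group ring $\mathbb{Z}G$ is an S-ring (Schur ring) over $G$ if there is a partition $\mathcal{S}(\mathcal{A})$ of $G$ such that (S1) $\{e\}\in\mathcal{S}(\mathcal{A})$; (S2) $X\in\mathcal{S}(\mathcal{A})\Rightarrow X^{-1}\in\mathcal{S}(\mathcal{A})$; (S3) $\mathcal{A}$ is the $\mathbb{Z}$-span of $\{\underline{X}: X\in\mathcal{S}(\mathcal{A})\}$. The elements of $\mathcal{S}(\mathcal{A})$ are the basic sets. An S-ring is central if it is contained in the center $\mathcal{Z}(\mathbb{Z}G)$ of $\mathbb{Z}G$. For an integer $m$ coprime to $|G|$, $\sigma_m:G\to G$, $x\mapsto x^m$, and for $X\subseteq G$, $X^{(m)}=\{x^m: x\in X\}$. *)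

(* Defs.v *)
From HB Require Import structures.
From mathcomp Require Import all_boot all_order all_fingroup all_algebra.
Set Implicit Arguments. Unset Strict Implicit. Unset Printing Implicit Defensive.
Import GRing.Theory Num.Theory.

(* The finite group G is the full carrier of a finGroupType gT.
   The group ring ZG is modelled as {ffun gT -> int}: a = sum_g a(g) g. *)

Local Open Scope ring_scope.

Section GroupRing.
Variable gT : finGroupType.

Local Notation grring := {ffun gT -> int}.

Definition grmul (a b : grring) : grring :=
  [ffun z => \sum_(x : gT) a x * b ((x^-1) * z)%g].

Definition uline (X : {set gT}) : grring := [ffun z => ((z \in X) : nat)%:Z].

Definition grone : grring := uline [set 1%g].

Definition inSpan (P : {set {set gT}}) (a : grring) : Prop :=
  exists c : {set gT} -> int, a = \sum_(X in P) uline X *~ c X.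

(* S-ring over gT with basic sets P (conditions S1, S2, S3; the span is a
   subring of ZG: it is an additive subgroup by construction, contains
   1 = uline [set 1] by S1, and we require closure under multiplication). *)
Definition is_Sring (P : {set {set gT}}) : Prop :=
  [/\ partition P [set: gT],
      [set 1%g] \in P,
      (forall X, X \in P -> (X^-1)%g \in P) &
      (forall a b, inSpan P a -> inSpan P b -> inSpan P (grmul a b))].

Definition central_Sring (P : {set {set gT}}) : Prop :=
  forall a, inSpan P a -> forall b : grring, grmul a b = grmul b a.

Definition gexpz (x : gT) (m : int) : gT :=
  match m with
  | Posz n => (x ^+ n)%g
  | Negz n => (x ^+ n.+1)^-1%g
  end.

Definition setexpz (X : {set gT}) (m : int) : {set gT} :=
  [set gexpz x m | x in X].

End GroupRing.

(* Main.v *)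
Require Import Defs.
From HB Require Import structures.
From mathcomp Require Import all_boot all_order all_fingroup all_algebra all_solvable.
Import GRing.Theory Num.Theory.
Set Implicit Arguments. Unset Strict Implicit. Unset Printing Implicit Defensive.
Local Open Scope ring_scope.

Lemma mod_cancel (c a b p : nat) : coprime c p -> (c * a = c * b %[mod p])%N -> (a = b %[mod p])%N.
Proof.
wlog le: a b / (a <= b)%N.
  move=> h cp e; case: (leqP a b) => ab; first exact: h.
  by apply/esym; apply: (h b a (ltnW ab) cp); apply/esym.
move=> cp /eqP; rewrite eq_sym eqn_mod_dvd ?leq_mul2l ?le ?orbT // -mulnBr.
rewrite Gauss_dvdr; last by rewrite coprime_sym.
by move=> d; apply/eqP; rewrite eq_sym eqn_mod_dvd.
Qed.

Lemma sum_mod (I : Type) (r : seq I) (F G : I -> nat) p :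
  (forall i, F i = G i %[mod p])%N -> (\sum_(i <- r) F i = \sum_(i <- r) G i %[mod p])%N.
Proof.
move=> hF; elim/big_rec2: _ => // i a b _ e.
by rewrite -modnDm hF e modnDm.
Qed.

Section Alg.
Variable gT : finGroupType.
Local Notation R := {ffun gT -> int}.

Lemma ffD (a b : R) x : (a + b) x = a x + b x. Proof. by rewrite !ffunE. Qed.
Lemma ff0 x : (0 : R) x = 0. Proof. by rewrite !ffunE. Qed.
Lemma ffZ (a : R) k x : (a *~ k) x = a x *~ k. Proof. by rewrite ffunMzE. Qed.
Lemma ffN (a : R) x : (- a) x = - a x. Proof. by rewrite !ffunE. Qed.
Lemma grmulE (a b : R) z : grmul a b z = \sum_x a x * b (x^-1 * z)%g.
Proof. by rewrite ffunE. Qed.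

Lemma grmulDl (a1 a2 b : R) : grmul (a1 + a2) b = grmul a1 b + grmul a2 b.
Proof.
apply/ffunP=> z; rewrite ffD !grmulE -big_split /=.
by apply: eq_bigr => x _; rewrite ffD mulrDl.
Qed.
Lemma grmulDr (a b1 b2 : R) : grmul a (b1 + b2) = grmul a b1 + grmul a b2.
Proof.
apply/ffunP=> z; rewrite ffD !grmulE -big_split /=.
by apply: eq_bigr => x _; rewrite ffD mulrDr.
Qed.
Lemma grmulZl (a b : R) k : grmul (a *~ k) b = grmul a b *~ k.
Proof.
apply/ffunP=> z; rewrite ffZ !grmulE mulrz_suml.
by apply: eq_bigr => x _; rewrite ffZ mulrzAl.
Qed.
Lemma grmulZr (a b : R) k : grmul a (b *~ k) = grmul a b *~ k.
Proof.
apply/ffunP=> z; rewrite ffZ !grmulE mulrz_suml.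
by apply: eq_bigr => x _; rewrite ffZ mulrzAr.
Qed.
Lemma grmul0l (b : R) : grmul 0 b = 0.
Proof. by apply/ffunP=> z; rewrite ff0 grmulE big1 // => x _; rewrite ff0 mul0r. Qed.
Lemma grmul0r (b : R) : grmul b 0 = 0.
Proof. by apply/ffunP=> z; rewrite ff0 grmulE big1 // => x _; rewrite ff0 mulr0. Qed.

Lemma ulineE (X : {set gT}) z : uline X z = ((z \in X) : nat)%:Z.
Proof. by rewrite ffunE. Qed.

Lemma grmul1l (a : R) : grmul (grone gT) a = a.
Proof.
apply/ffunP=> z; rewrite grmulE (bigD1 1%g) //= big1 => [|x nx1].
  by rewrite ulineE set11 mul1r invg1 mul1g addr0.
by rewrite ulineE inE (negPf nx1) mul0r.
Qed.
Lemma grmul1r (a : R) : grmul a (grone gT) = a.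
Proof.
apply/ffunP=> z; rewrite grmulE (bigD1 z) //= big1 => [|x nxz].
  by rewrite ulineE mulVg set11 mulr1 addr0.
rewrite ulineE inE; case: eqP => [h|]; last by rewrite mulr0.
by case/eqP: nxz; rewrite -[z](mulKVg x) h mulg1.
Qed.

Lemma grmulA (a b c : R) : grmul (grmul a b) c = grmul a (grmul b c).
Proof.
apply/ffunP=> z; rewrite !grmulE.
under eq_bigr do rewrite grmulE mulr_suml.
rewrite exchange_big /=; apply: eq_bigr => x _.
rewrite grmulE mulr_sumr (reindex_inj (mulgI x)) /=.
by apply: eq_bigr => u _; rewrite mulKg invMg mulgA mulrA.
Qed.

Definition pw (c : R) k := iter k (grmul c) (grone gT).
Lemma pwS c k : pw c k.+1 = grmul c (pw c k). Proof. by []. Qed.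

Lemma pw_comm a b k : grmul a b = grmul b a -> grmul (pw a k) b = grmul b (pw a k).
Proof.
move=> ab; elim: k => [|k IH]; first by rewrite /= grmul1l grmul1r.
by rewrite pwS grmulA IH -grmulA ab grmulA.
Qed.

Lemma pwM a b k : grmul a b = grmul b a ->
  pw (grmul a b) k = grmul (pw a k) (pw b k).
Proof.
move=> ab; elim: k => [|k IH]; first by rewrite /= grmul1l.
rewrite pwS IH !pwS.
rewrite [LHS]grmulA -[grmul b (grmul _ _)]grmulA -(pw_comm k ab).
by rewrite [grmul (grmul _ b) _]grmulA [RHS]grmulA.
Qed.

Lemma central_class (a : R) : (forall b, grmul a b = grmul b a) ->
  forall x y, a (x ^ y)%g = a x.
Proof.
move=> ca x y; have := congr1 (fun f : R => f (x * y)%g) (ca (uline [set y])).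
rewrite !grmulE (bigD1 x) //= big1 => [|u nu]; last first.
  rewrite ulineE inE; case: eqP => [h|]; last by rewrite mulr0.
  by case/eqP: nu; apply: (mulIg y); rewrite -{1}h mulKVg.
rewrite (bigD1 y) //= big1 => [|u nu]; last by rewrite ulineE inE (negPf nu) mul0r.
rewrite !ulineE !inE mulKg eqxx mulr1 mul1r !addr0.
by rewrite conjgE mulgA => ->.
Qed.

Section Span.
Variable P : {set {set gT}}.

Lemma span_ind (Q : R -> Prop) a : inSpan P a -> Q 0 ->
  (forall a b, Q a -> Q b -> Q (a + b)) ->
  (forall X k, X \in P -> Q (uline X *~ k)) -> Q a.
Proof.
case=> c -> Q0 QD QX; elim/big_ind: _ => // X XP; exact: QX.
Qed.

Lemma span0 : inSpan P 0.
Proof. by exists (fun _ => 0); rewrite big1 // => X _; rewrite mulr0z. Qed.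

Lemma spanD a b : inSpan P a -> inSpan P b -> inSpan P (a + b).
Proof.
case=> c1 -> [c2 ->]; exists (fun X => c1 X + c2 X); rewrite -big_split /=.
by apply: eq_bigr => X _; rewrite mulrzDr.
Qed.

Lemma spanZ a k : inSpan P a -> inSpan P (a *~ k).
Proof.
case=> c ->; exists (fun X => c X * k); rewrite mulrz_suml.
by apply: eq_bigr => X _; rewrite mulrzA.
Qed.

Lemma span_uline X : X \in P -> inSpan P (uline X).
Proof.
move=> XP; exists (fun Y => ((Y == X) : nat)%:Z).
rewrite (bigD1 X) //= eqxx mulr1z big1 ?addr0 // => Y /andP[_ /negPf ->].
by rewrite mulr0z.
Qed.

Lemma span_sum I (r : seq I) (F : I -> R) :
  (forall i, inSpan P (F i)) -> inSpan P (\sum_(i <- r) F i).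
Proof. move=> h; elim/big_ind: _ => //; [exact: span0 | exact: spanD]. Qed.

Lemma span_const a Y h1 h2 : partition P [set: gT] -> inSpan P a ->
  Y \in P -> h1 \in Y -> h2 \in Y -> a h1 = a h2.
Proof.
move=> /and3P[_ tP _] sa YP h1Y h2Y; apply: (@span_ind (fun a => a h1 = a h2) a sa).
- by rewrite !ff0.
- by move=> a1 a2 e1 e2; rewrite !ffD e1 e2.
move=> X k XP; rewrite !ffZ !ulineE.
have -> : (h1 \in X) = (h2 \in X); last by [].
apply/idP/idP => hX.
  by rewrite -(def_pblock tP XP hX) (def_pblock tP YP h1Y).
by rewrite -(def_pblock tP XP hX) (def_pblock tP YP h2Y).
Qed.

End Span.

Lemma sumPosz I (r : seq I) (Pr : pred I) (F : I -> nat) :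
  Posz (\sum_(i <- r | Pr i) F i)%N = \sum_(i <- r | Pr i) (F i)%:Z.
Proof. exact: (big_morph Posz PoszD (erefl 0%:Z)). Qed.

Section Count.
Variables (E : finType) (D : {set E}) (pi : E -> gT).

Definition cnt z := #|[set e in D | pi e == z]|.
Definition prodt k (t : {ffun 'I_k -> E}) := (\prod_(i < k) pi (t i))%g.
Definition Sk k g := [set t : {ffun 'I_k -> E} | [forall i, t i \in D] && (prodt t == g)].

Definition fcons k (u : E * {ffun 'I_k -> E}) : {ffun 'I_k.+1 -> E} :=
  [ffun i => if unlift ord0 i is Some j then u.2 j else u.1].
Definition ftl k (t : {ffun 'I_k.+1 -> E}) := (t ord0, [ffun j => t (lift ord0 j)]).

Lemma fcons0 k (u : E * {ffun 'I_k -> E}) : fcons u ord0 = u.1.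
Proof. by rewrite ffunE unlift_none. Qed.
Lemma fconsS k (u : E * {ffun 'I_k -> E}) j : fcons u (lift ord0 j) = u.2 j.
Proof. by rewrite ffunE liftK. Qed.

Lemma fconsK k : cancel (@fcons k) (@ftl k).
Proof. by case=> e t; rewrite /ftl fcons0; congr (_, _); apply/ffunP=> j; rewrite ffunE fconsS. Qed.
Lemma ftlK k : cancel (@ftl k) (@fcons k).
Proof. by move=> t; apply/ffunP=> i; rewrite ffunE; case: unliftP => [j ->|->]; rewrite /= ?ffunE. Qed.

Lemma mem_Sk_cons k g e (t : {ffun 'I_k -> E}) : (fcons (e, t) \in Sk k.+1 g) =
  (e \in D) && (t \in Sk k ((pi e)^-1 * g)%g).
Proof.
rewrite !inE /prodt big_ord_recl fcons0 /=.
under eq_bigr do rewrite fconsS.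
have -> : [forall i, fcons (e, t) i \in D] = (e \in D) && [forall i, t i \in D].
  apply/forallP/andP => [h|[eD /forallP h] i].
    split; first by have := h ord0; rewrite fcons0.
    by apply/forallP=> j; have := h (lift ord0 j); rewrite fconsS.
  by case: (unliftP ord0 i) => [j ->|->]; rewrite ?fcons0 ?fconsS.
rewrite -andbA; congr (_ && (_ && _)); apply/eqP/eqP => [<-|->]; first by rewrite mulKg.
by rewrite mulKVg.
Qed.

Lemma card_Sk_rec k g :
  #|Sk k.+1 g| = (\sum_x cnt x * #|Sk k (x^-1 * g)%g|)%N.
Proof.
rewrite -sum1_card big_mkcond /=.
rewrite (reindex (@fcons k)); last by apply: onW_bij; exists (@ftl k); [apply: fconsK | apply: ftlK].
rewrite -(pair_bigA _ (fun e t => if fcons (e, t) \in Sk k.+1 g then 1 else 0)%N) /=.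
transitivity (\sum_(e | e \in D) #|Sk k ((pi e)^-1 * g)%g|)%N.
  rewrite [RHS]big_mkcond /=; apply: eq_bigr => e _.
  under eq_bigr do rewrite mem_Sk_cons.
  case: (e \in D) => /=; last by rewrite big1.
  by rewrite -big_mkcond sum1_card.
rewrite (partition_big pi xpredT) //=; apply: eq_bigr => x _.
rewrite /cnt -sum_nat_const; apply: eq_big => [e|e /andP[_ /eqP->]] //.
by rewrite inE.
Qed.

Lemma pw_count (c : R) : (forall z, c z = (cnt z)%:Z) ->
  forall k g, pw c k g = (#|Sk k g|)%:Z.
Proof.
move=> hc; elim=> [|k IH] g.
  rewrite /= ulineE inE.
  have -> : Sk 0 g = if 1%g == g then setT else set0.
    apply/setP=> t; rewrite !inE /prodt big_ord0.
    case: eqP => _; rewrite ?inE ?andbF // andbT; apply/forallP; case=> //.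
  rewrite eq_sym; case: (1%g == g) => /=; last by rewrite cards0.
  by rewrite cardsT card_ffun card_ord expn0.
rewrite pwS grmulE card_Sk_rec sumPosz; apply: eq_bigr => x _.
by rewrite hc IH PoszM.
Qed.

Definition rot k (t : {ffun 'I_k -> E}) := [ffun i => t (ordS i)].

Lemma rot_inj k : injective (@rot k).
Proof.
move=> t1 t2 /ffunP h; apply/ffunP=> i; have := h (ord_pred i).
by rewrite !ffunE ord_predK.
Qed.

Lemma iter_ordS k j (i : 'I_k) : val (iter j (@ordS k) i) = ((i + j) %% k)%N.
Proof.
elim: j => [|j IH] /=; first by rewrite addn0 modn_small.
by rewrite /ordS /= IH -addn1 modnDml -addnA addn1.
Qed.

Lemma iter_rot k j (t : {ffun 'I_k -> E}) i : iter j (@rot k) t i = t (iter j (@ordS k) i).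
Proof. by elim: j i => [|j IH] i //=; rewrite ffunE IH; congr (t _); rewrite -iterSr. Qed.

Lemma iter_rot_p k (t : {ffun 'I_k -> E}) : iter k (@rot k) t = t.
Proof.
apply/ffunP=> i; rewrite iter_rot; congr (t _); apply: val_inj.
by rewrite iter_ordS modnDr modn_small.
Qed.

Lemma prodt_rot k (t : {ffun 'I_k.+1 -> E}) :
  prodt (rot t) = (prodt t ^ pi (t ord0))%g.
Proof.
rewrite /prodt big_ord_recr big_ord_recl /= !ffunE.
have -> : ordS (@ord_max k) = ord0 by apply: val_inj; rewrite /= modnn.
rewrite conjgE -mulgA (mulKg (pi (t ord0))).
rewrite (eq_bigr (fun i => pi (t (lift ord0 i)))) // => i _.
rewrite ffunE; do 2 f_equal; apply: val_inj.
by rewrite /= /bump /= add1n modn_small // ltnS.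
Qed.

Lemma prod_const (x : gT) k : (\prod_(i < k) x)%g = (x ^+ k)%g.
Proof. by rewrite big_const_ord; elim: k => //= k ->; rewrite expgS. Qed.

Lemma frob p w : prime p -> (#|gT| < p)%N -> injective (fun x : gT => (x ^+ p)%g) ->
  (forall h y, #|Sk p (h ^ y)%g| = #|Sk p h|) -> (forall h y, cnt (h ^ y)%g = cnt h) ->
  (#|Sk p (w ^+ p)%g| = cnt w %[mod p])%N.
Proof.
move=> pr np injp hS hc; have p_gt0 := prime_gt0 pr.
have [k pk] : exists k, p = k.+1 by exists p.-1; rewrite prednK.
subst p.
set C := ((w ^+ k.+1) ^: [set: gT])%g.
have Cconj h y : ((h ^ y)%g \in C) = (h \in C).
  apply/idP/idP => hC.
    rewrite -(conjgK y h); apply: (class_trans _ hC); exact: memJ_class (in_setT _).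
  apply: (class_trans _ hC); exact: memJ_class (in_setT _).
have wC : (w ^+ k.+1)%g \in C by exact: class_refl.
have cop : coprime #|C| k.+1.
  have Cgt0 : (0 < #|C|)%N by apply/card_gt0P; exists (w ^+ k.+1)%g.
  rewrite coprime_sym prime_coprime //; apply/negP => /(dvdn_leq Cgt0) le.
  by have := leq_trans le (max_card _); rewrite leqNgt np.
set SC := [set t : {ffun 'I_k.+1 -> E} | [forall i, t i \in D] && (prodt t \in C)].
have eSC : #|SC| = (#|C| * #|Sk k.+1 (w ^+ k.+1)%g|)%N.
  rewrite -sum1_card (partition_big (@prodt k.+1) (mem C)) /=; last first.
    by move=> t; rewrite inE => /andP[].
  rewrite -sum_nat_const; apply: eq_bigr => h hC.
  have [y _ ->] := imsetP hC.
  rewrite -(hS _ y) -sum1_card; apply: eq_bigl => t; rewrite !inE.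
  case: eqP => [->|]; rewrite ?andbF ?andbT // Cconj wC; exact: andbT.
have rinj := @rot_inj k.+1.
pose r := perm rinj.
have rE t : r t = rot t by rewrite permE.
have rp : (r ^+ k.+1)%g = 1%g.
  apply/permP => t; rewrite permX perm1 (eq_iter rE); exact: iter_rot_p.
have pG : ((k.+1).-group <[r]>)%g.
  rewrite pgroupE; apply: (@pnat_dvd #[r]%g); last exact: pnat_id.
  by rewrite order_dvdn rp.
have actsSC : [acts <[r]>%g, on SC | 'P].
  rewrite cycle_subG; apply/astabsP => t /=; rewrite apermE rE !inE prodt_rot Cconj.
  congr (_ && _); apply/forallP/forallP => h i.
    by have := h (ord_pred i); rewrite ffunE ord_predK.
  by rewrite ffunE.
have := pgroup_fix_mod pG actsSC.
rewrite afix_cycle.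
set DC := [set e in D | (pi e ^+ k.+1)%g \in C].
have eFix : #|SC :&: 'Fix_'P[r]%g| = #|DC|.
  have -> : SC :&: 'Fix_'P[r]%g = [set [ffun=> e] | e in DC].
    apply/setP => t; rewrite in_setI; apply/andP/imsetP => [[tS /afix1P]|[e]].
      rewrite /= apermE rE => rt.
      have tc j i : t (iter j (@ordS k.+1) i) = t i.
        elim: j => //= j <-; by rewrite -[in RHS]rt ffunE.
      have tc0 i : t i = t ord0.
        rewrite -(tc i ord0); congr (t _); apply: val_inj.
        by rewrite iter_ordS add0n modn_small.
      have pt : prodt t = (pi (t ord0) ^+ k.+1)%g.
        by rewrite /prodt (eq_bigr (fun=> pi (t ord0))) ?prod_const // => i _; rewrite tc0.
      move: tS; rewrite inE pt => /andP[/forallP/(_ ord0) t0D t0C].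
      exists (t ord0); first by rewrite inE t0D.
      by apply/ffunP => i; rewrite ffunE tc0.
    rewrite inE => /andP[eD eC] ->; split.
      rewrite inE; apply/andP; split; first by apply/forallP => i; rewrite ffunE.
      by rewrite /prodt (eq_bigr (fun=> pi e)) ?prod_const // => i _; rewrite ffunE.
    apply/afix1P; rewrite /= apermE rE; apply/ffunP => i; by rewrite !ffunE.
  apply: card_imset => e1 e2 /ffunP/(_ ord0); by rewrite !ffunE.
have eDC : #|DC| = (#|C| * cnt w)%N.
  rewrite -sum1_card (partition_big (fun e => pi e ^+ k.+1)%g (mem C)) /=; last first.
    by move=> e; rewrite inE => /andP[].
  rewrite -sum_nat_const; apply: eq_bigr => h hC.
  have [y _ ->] := imsetP hC.
  rewrite -(hc w y) /cnt -sum1_card; apply: eq_bigl => e; rewrite !inE conjXg.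
  have -> : ((pi e ^+ k.+1)%g == ((w ^ y) ^+ k.+1)%g) = (pi e == (w ^ y)%g).
    exact: (inj_eq injp).
  case: eqP => [->|]; rewrite ?andbF // -conjXg Cconj wC; exact: andbT.
rewrite eSC eFix eDC; exact: mod_cancel.
Qed.

End Count.

Lemma cnt_id (X : {set gT}) z : cnt X id z = (z \in X).
Proof.
rewrite /cnt; case: (boolP (z \in X)) => h.
  rewrite (_ : [set e in X | id e == z] = [set z]) ?cards1 //.
  by apply/setP => e; rewrite !inE andbC; case: eqP => [->|_] //=; rewrite h.
rewrite (_ : [set e in X | id e == z] = set0) ?cards0 //.
apply/setP => e; rewrite !inE; apply/negP => /andP[eX /eqP ez].
by move: h; rewrite -ez eX.
Qed.

Definition mulcnt (X Y : {set gT}) z := (\sum_x (x \in X) * ((x^-1 * z)%g \in Y))%N.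

Lemma grmul_uline X Y z : grmul (uline X) (uline Y) z = (mulcnt X Y z)%:Z.
Proof. by rewrite grmulE /mulcnt sumPosz; apply: eq_bigr => x _; rewrite !ulineE PoszM. Qed.

Lemma mulcnt_le X Y z : (mulcnt X Y z <= #|gT|)%N.
Proof.
rewrite /mulcnt -sum1_card; apply: leq_sum => x _.
by case: (x \in X); case: (_ \in Y).
Qed.

Lemma cnt_pair (X Y : {set gT}) z :
  cnt (setX X Y) (fun e : gT * gT => (e.1 * e.2)%g) z = mulcnt X Y z.
Proof.
rewrite /cnt /mulcnt -sum1_card (partition_big (fun e : gT * gT => e.1) xpredT) //=.
apply: eq_bigr => x _.
case: (boolP (x \in X)) => hx; case: (boolP ((x^-1 * z)%g \in Y)) => hy /=.
- rewrite (big_pred1 (x, (x^-1 * z)%g)) // => -[a b] /=; rewrite !inE /=; apply/idP/idP.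
    by case/andP => /andP[/andP[_ _] /eqP <-] /eqP ->; rewrite mulKg.
  by case/eqP => -> ->; rewrite hx hy mulKVg !eqxx.
- rewrite big_pred0 // => -[a b]; rewrite !inE /=.
  apply/negP => /andP[/andP[/andP[_ bY] /eqP ab] /eqP ax]; move: hy.
  by rewrite -ab ax mulKg bY.
- rewrite big_pred0 // => -[a b]; rewrite !inE /=.
  by apply/negP => /andP[/andP[/andP[aX _] _] /eqP ax]; move: hx; rewrite -ax aX.
- rewrite big_pred0 // => -[a b]; rewrite !inE /=.
  by apply/negP => /andP[/andP[/andP[aX _] _] /eqP ax]; move: hx; rewrite -ax aX.
Qed.

Definition pinv k := (k ^ (totient #|gT|).-1)%N.

Lemma expg_card (x : gT) : (x ^+ #|gT|)%g = 1%g.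
Proof. by rewrite -cardsT (expg_cardG (G := [set: gT]%G)) ?inE. Qed.

Lemma powK k : coprime k #|gT| -> forall x : gT, ((x ^+ k) ^+ pinv k)%g = x.
Proof.
move=> cp x; have n0 : (0 < #|gT|)%N by apply/card_gt0P; exists 1%g.
rewrite -expgM /pinv -expnS prednK ?totient_gt0 //.
by rewrite -(expg_mod _ (expg_card x)) Euler_exp_totient // (expg_mod _ (expg_card x)) expg1.
Qed.

Lemma powKV k : coprime k #|gT| -> forall x : gT, ((x ^+ pinv k) ^+ k)%g = x.
Proof. by move=> cp x; rewrite -expgM mulnC expgM powK. Qed.

Lemma pow_inj k : coprime k #|gT| -> injective (fun x : gT => (x ^+ k)%g).
Proof. by move=> cp x y /= e; rewrite -(powK cp x) e powK. Qed.

Lemma mem_pow k (X : {set gT}) h : coprime k #|gT| ->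
  (h \in [set (x ^+ k)%g | x in X]) = ((h ^+ pinv k)%g \in X).
Proof.
move=> cp; apply/imsetP/idP => [[x xX ->]|hX]; first by rewrite powK.
by exists (h ^+ pinv k)%g; rewrite ?powKV.
Qed.

Lemma union_blocks (P : {set {set gT}}) (s s' : gT -> gT) :
  partition P [set: gT] -> cancel s s' -> cancel s' s ->
  (forall X Y h h', X \in P -> Y \in P -> h \in Y -> h' \in Y ->
     h \in s @: X -> h' \in s @: X) ->
  forall X, X \in P -> s @: X \in P.
Proof.
move=> /and3P[/eqP cP tP nP] ss' s's H.
have covP x : x \in cover P by rewrite cP inE.
have memS X h : (h \in s @: X) = (s' h \in X).
  apply/imsetP/idP => [[x xX ->]|hX]; first by rewrite ss'.
  by exists (s' h); rewrite ?s's.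
have ne Y : Y \in P -> repr Y \in Y.
  move=> YP; have : Y != set0 by apply: contraNneq nP => e; rewrite -e.
  by case/set0Pn => y yY; apply: mem_repr yY.
pose rho Y := pblock P (s' (repr Y)).
have rhoE X Y : X \in P -> Y \in P -> Y \subset s @: X -> rho Y = X.
  move=> XP YP /subsetP sub; apply: def_pblock => //.
  by rewrite -memS; apply: sub; apply: ne.
have blk X h : X \in P -> h \in s @: X -> pblock P h \subset s @: X.
  move=> XP hX; apply/subsetP => h' h'b.
  by apply: (H X (pblock P h) h h') => //; [apply: pblock_mem | rewrite mem_pblock].
have surj : P \subset rho @: P.
  apply/subsetP => X XP; apply/imsetP; exists (pblock P (s (repr X))).
    exact: pblock_mem.
  by apply/esym/rhoE => //; [apply: pblock_mem | apply: blk => //; apply: imset_f; apply: ne].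
have inj : {in P &, injective rho}.
  by apply/imset_injP; rewrite eqn_leq leq_imset_card (subset_leq_card surj).
move=> X XP.
have hx : s (repr X) \in s @: X by apply: imset_f; apply: ne.
suff -> : s @: X = pblock P (s (repr X)) by apply: pblock_mem.
apply/eqP; rewrite eqEsubset blk // andbT; apply/subsetP => h hX.
have e1 : rho (pblock P h) = X by apply: rhoE => //; [apply: pblock_mem | apply: blk].
have e2 : rho (pblock P (s (repr X))) = X by apply: rhoE => //; [apply: pblock_mem | apply: blk].
have := inj _ _ (pblock_mem (covP h)) (pblock_mem (covP (s (repr X)))).
by rewrite e1 e2 => /(_ erefl) <-; rewrite mem_pblock.
Qed.

Section Main.
Variable P : {set {set gT}}.
Hypothesis HS : is_Sring P.
Hypothesis HC : central_Sring P.

Lemma partP : partition P [set: gT]. Proof. by case: HS. Qed.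
Lemma spanM a b : inSpan P a -> inSpan P b -> inSpan P (grmul a b).
Proof. by case: HS => _ _ _; apply. Qed.
Lemma span_one : inSpan P (grone gT).
Proof. by apply: span_uline; case: HS. Qed.
Lemma span_pw a k : inSpan P a -> inSpan P (pw a k).
Proof. by move=> sa; elim: k => [|k IH]; [exact: span_one | rewrite pwS; exact: spanM]. Qed.
Lemma span_class a x y : inSpan P a -> a (x ^ y)%g = a x.
Proof. by move=> sa; apply: central_class => b; exact: HC. Qed.

Definition Good k :=
  (forall X, X \in P -> [set (x ^+ k)%g | x in X] \in P) /\
  (forall X Y z, X \in P -> Y \in P ->
     grmul (uline [set (x ^+ k)%g | x in X]) (uline [set (x ^+ k)%g | x in Y]) (z ^+ k)%g
     = grmul (uline X) (uline Y) z).

Lemma n0 : (0 < #|gT|)%N. Proof. by apply/card_gt0P; exists 1%g. Qed.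

Lemma good_prime p : prime p -> (#|gT| < p)%N -> Good p.
Proof.
move=> pr np.
have cp : coprime p #|gT|.
  by rewrite prime_coprime //; apply/negP => /(dvdn_leq n0) le; rewrite leqNgt np in le.
have injp := pow_inj cp.
have p1 := prime_gt1 pr.
have frobX X w : X \in P -> (#|Sk X id p (w ^+ p)%g| = (w \in X) %[mod p])%N.
  move=> XP; rewrite -(cnt_id X w).
  have hc z : uline X z = (cnt X id z)%:Z by rewrite ulineE cnt_id.
  apply: frob => // h y.
    have := span_class h y (span_pw p (span_uline XP)).
    by rewrite !(pw_count hc) => -[].
  rewrite !cnt_id; have := span_class h y (span_uline XP).
  by rewrite !ulineE => -[].
split.
  move=> X XP; apply: (union_blocks partP (powK cp) (powKV cp)) => // {}X Y h h' {}XP YP hY h'Y.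
  rewrite !mem_pow // => hX.
  have hc : forall z, uline X z = (cnt X id z)%:Z by move=> z; rewrite ulineE cnt_id.
  have e := span_const partP (span_pw p (span_uline XP)) YP hY h'Y.
  rewrite !(pw_count hc) in e; case: e => e.
  have e1 := frobX X (h ^+ pinv p)%g XP; rewrite powKV // e hX in e1.
  have e2 := frobX X (h' ^+ pinv p)%g XP; rewrite powKV // e1 in e2.
  move: e2; case: (boolP ((h' ^+ pinv p)%g \in X)) => [//|_]; rewrite /= mod0n modn_small //.
move=> X Y z XP YP.
set Xp := [set (x ^+ p)%g | x in X]; set Yp := [set (x ^+ p)%g | x in Y].
rewrite !grmul_uline; congr Posz.
have lt w (A B : {set gT}) : (mulcnt A B w < p)%N by apply: leq_ltn_trans (mulcnt_le _ _ _) np.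
rewrite -(modn_small (lt _ Xp Yp)) -(modn_small (lt z X Y)).
have hcX A : forall z, uline A z = (cnt A id z)%:Z by move=> w; rewrite ulineE cnt_id.
have congX A w : A \in P -> (#|Sk A id p w| = (w \in [set (x ^+ p)%g | x in A]) %[mod p])%N.
  by move=> AP; rewrite mem_pow // -{1}(powKV cp w) frobX.
pose pim := fun e : gT * gT => (e.1 * e.2)%g.
have hc2 : forall w, grmul (uline X) (uline Y) w = (cnt (setX X Y) pim w)%:Z.
  by move=> w; rewrite grmul_uline cnt_pair.
have sc : inSpan P (grmul (uline X) (uline Y)) by apply: spanM; apply: span_uline.
have f2 : (#|Sk (setX X Y) pim p (z ^+ p)%g| = mulcnt X Y z %[mod p])%N.
  rewrite -cnt_pair; apply: frob => // h y.
    have := span_class h y (span_pw p sc).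
    by rewrite !(pw_count hc2) => -[].
  have := span_class h y sc.
  by rewrite !hc2 => -[].
have comm : grmul (uline X) (uline Y) = grmul (uline Y) (uline X).
  by apply: HC; apply: span_uline.
have e := pwM p comm.
have := congr1 (fun f : {ffun gT -> int} => f (z ^+ p)%g) e.
rewrite /= (pw_count hc2) grmulE.
under eq_bigr do rewrite (pw_count (hcX X)) (pw_count (hcX Y)) -PoszM.
rewrite -sumPosz => -[e2].
rewrite -f2 e2 /mulcnt; apply: sum_mod => x.
by rewrite /Xp /Yp -modnMm -(congX X) // -(congX Y) // modnMm.
Qed.

Lemma setexp1 (X : {set gT}) : [set (x ^+ 1)%g | x in X] = X.
Proof.
apply/setP => y; apply/imsetP/idP => [[x xX ->]|yX]; first by rewrite expg1.
by exists y; rewrite ?expg1.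
Qed.

Lemma setexpM a b (X : {set gT}) :
  [set (x ^+ (a * b))%g | x in X] = [set (y ^+ b)%g | y in [set (x ^+ a)%g | x in X]].
Proof.
apply/setP => y; apply/imsetP/imsetP => [[x xX ->]|[u /imsetP[x xX ->] ->]].
  by exists (x ^+ a)%g; [apply: imset_f | rewrite expgM].
by exists x; rewrite ?expgM.
Qed.

Lemma good1 : Good 1.
Proof. by split=> [X XP|X Y z _ _]; rewrite !setexp1 ?expg1. Qed.

Lemma good_mul a b : Good a -> Good b -> Good (a * b).
Proof.
move=> [Ga1 Ga2] [Gb1 Gb2]; split=> [X XP|X Y z XP YP].
  by rewrite setexpM; apply: Gb1; apply: Ga1.
by rewrite !setexpM expgM Gb2 ?Ga1 // Ga2.
Qed.

Lemma good_all q : (0 < q)%N -> (forall l, prime l -> (l %| q)%N -> (#|gT| < l)%N) -> Good q.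
Proof.
elim/ltn_ind: q => q IH q0 hq.
case: (ltngtP q 1) => [|q1|->]; first by rewrite ltnS leqn0 => /eqP q00; rewrite q00 in q0.
  have pd := pdiv_prime q1; have dq := pdiv_dvd q.
  rewrite -(divnK dq); apply: good_mul; last by apply: good_prime => //; apply: hq.
  have d1 := prime_gt1 pd.
  apply: IH.
  - by apply: ltn_Pdiv.
  - by rewrite divn_gt0 ?(prime_gt0 pd) // dvdn_leq.
  move=> l pl ld; apply: hq => //; rewrite -(divnK dq); exact: dvdn_mulr.
exact: good1.
Qed.

End Main.
End Alg.

Unset Implicit Arguments.

Theorem theorem1p2 (gT : finGroupType) (P : {set {set gT}}) (m : int) :
  is_Sring P -> central_Sring P -> coprime `|m|%N #|gT| ->
  (forall X, X \in P -> setexpz X m \in P) /\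
  exists f : {ffun gT -> int} -> {ffun gT -> int},
    [/\ (forall X, X \in P -> f (uline X) = uline (setexpz X m)),
        (forall a, inSpan P a -> inSpan P (f a)),
        (forall a b, inSpan P a -> inSpan P b -> f a = f b -> a = b) &
        (forall b, inSpan P b -> exists2 a, inSpan P a & f a = b)] /\
    [/\ (forall a b, inSpan P a -> inSpan P b -> f (a + b) = f a + f b),
        (forall (k : int) a, inSpan P a -> f (a *~ k) = f a *~ k),
        (forall a b, inSpan P a -> inSpan P b -> f (grmul a b) = grmul (f a) (f b)) &
        f (grone gT) = grone gT].
Proof.
move=> HS HC cop.
set n := #|gT|.
have n0 : (0 < n)%N by apply/card_gt0P; exists 1%g.
have [e ge cope] : exists2 e : nat, (forall x : gT, gexpz x m = (x ^+ e)%g) & coprime e n.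
  case: m cop => k /= ck.
    by exists k.
  exists (k.+1 * n.-1)%N; last by rewrite coprimeMl ck coprimePn.
  move=> x; rewrite expgM /=; set y := (x ^+ k.+1)%g.
  apply: (mulIg y); rewrite mulVg -expgSr prednK //; exact/esym/expg_card.
pose K := (\prod_(l < n.+1 | prime l && ~~ (l %| e)) l)%N.
pose q := (e + n * K)%N.
have qe (x : gT) : (x ^+ q)%g = (x ^+ e)%g.
  by rewrite /q expgD expgM /n expg_card expg1n mulg1.
have K0 : (0 < K)%N by apply: prodn_cond_gt0 => l /andP[pl _]; exact: prime_gt0.
have q0 : (0 < q)%N by rewrite /q ltn_addl // muln_gt0 n0.
have qpr l : prime l -> (l %| q)%N -> (n < l)%N.
  move=> pl lq; rewrite ltnNge; apply/negP => ln.
  have lK : ~~ (l %| e)%N -> (l %| K)%N.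
    move=> le; rewrite /K (bigD1 (Ordinal (ln : (l < n.+1)%N))) /= ?pl ?le //.
    exact: dvdn_mulr.
  case: (boolP (l %| e)%N) => le.
    move: lq; rewrite /q dvdn_addr // Euclid_dvdM // => /orP[ln'|lK'].
      have := dvdn_gcd l e n; rewrite le ln' (eqP cope) Euclid_dvd1 //.
    move: lK'; rewrite /K Euclid_dvd_prod // big_has_cond => /hasP[i _ /andP[/andP[pi ni] li]].
    by move: li; rewrite dvdn_prime2 // => /eqP li; rewrite -li le in ni.
  by move: lq; rewrite /q dvdn_addl ?(negPf le) // dvdn_mull // lK.
have [G1 G2] := good_all HS HC q0 qpr.
have copq : coprime q #|gT|.
  by rewrite /coprime gcdnC /q addnC mulnC gcdnMDl gcdnC.
have sE (X : {set gT}) : setexpz X m = [set (x ^+ q)%g | x in X].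
  by rewrite /setexpz; apply: eq_imset => y /=; rewrite ge qe.
have phi_inj : injective (fun X : {set gT} => [set (x ^+ q)%g | x in X]).
  move=> X1 X2 /= E; apply/setP => x.
  by rewrite -(powK copq x) -!mem_pow // E.
have imP : [set [set (x ^+ q)%g | x in X] | X : {set gT} in P] = P.
  apply/eqP; rewrite eqEcard card_imset // leqnn andbT.
  by apply/subsetP => _ /imsetP[X XP ->]; apply: G1.
have preP Y : Y \in P -> [set z | (z ^+ q)%g \in Y] \in P.
  rewrite -{1}imP => /imsetP[X XP ->].
  rewrite (_ : [set z | _] = X) //; apply/setP => z.
  by rewrite inE mem_pow // powK.
split; first by move=> X XP; rewrite sE; apply: G1.
pose s (z : gT) := (z ^+ pinv gT q)%g.
pose f (a : {ffun gT -> int}) := [ffun z => a (s z)].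
have f0 : f 0 = 0 by apply/ffunP => z; rewrite !ffunE.
have fD a b : f (a + b) = f a + f b by apply/ffunP => z; rewrite !ffunE.
have fZ a k : f (a *~ k) = f a *~ k by apply/ffunP => z; rewrite ffunE !ffZ ffunE.
have fU (X : {set gT}) : f (uline X) = uline [set (x ^+ q)%g | x in X].
  by apply/ffunP => z; rewrite ffunE !ulineE mem_pow.
have fUs X : X \in P -> inSpan P (f (uline X)) by move=> XP; rewrite fU; apply: span_uline; apply: G1.
have fspan a : inSpan P a -> inSpan P (f a).
  move=> sa; apply: (@span_ind _ P (fun a => inSpan P (f a)) a sa).
  - by rewrite f0; apply: span0.
  - by move=> a1 a2 h1 h2; rewrite fD; apply: spanD.
  by move=> X k XP; rewrite fZ; apply: spanZ; apply: fUs.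
have fM1 X Y : X \in P -> Y \in P ->
    f (grmul (uline X) (uline Y)) = grmul (f (uline X)) (f (uline Y)).
  move=> XP YP; apply/ffunP => z; rewrite ffunE !fU.
  by rewrite -{2}(powKV copq z) G2.
exists f; split; split.
- by move=> X XP; rewrite fU sE.
- exact: fspan.
- move=> a b _ _ E; apply/ffunP => z.
  have := congr1 (fun g : {ffun gT -> int} => g (z ^+ q)%g) E.
  by rewrite !ffunE /s powK.
- move=> b sb; exists [ffun z => b (z ^+ q)%g]; last first.
    by apply/ffunP => z; rewrite !ffunE /s powKV.
  apply: (@span_ind _ P (fun b => inSpan P [ffun z => b (z ^+ q)%g]) b sb).
  + rewrite (_ : [ffun z => _] = 0); first exact: span0.
    by apply/ffunP => z; rewrite !ffunE.
  + move=> a1 a2 h1 h2; rewrite (_ : [ffun z => _] = [ffun z => a1 (z ^+ q)%g] + [ffun z => a2 (z ^+ q)%g]).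
      exact: spanD.
    by apply/ffunP => z; rewrite !ffunE.
  + move=> Y k YP; rewrite (_ : [ffun z => _] = uline [set z | (z ^+ q)%g \in Y] *~ k).
      by apply: spanZ; apply: span_uline; apply: preP.
    by apply/ffunP => z; rewrite ffunE !ffZ !ulineE inE.
- by move=> a b _ _; apply: fD.
- by move=> k a _; apply: fZ.
- move=> a b sa sb.
  apply: (@span_ind _ P (fun a => f (grmul a b) = grmul (f a) (f b)) a sa).
  + by rewrite grmul0l f0 grmul0l.
  + by move=> a1 a2 h1 h2; rewrite grmulDl fD h1 h2 fD grmulDl.
  move=> X k XP; rewrite grmulZl fZ fZ grmulZl; congr (_ *~ k).
  apply: (@span_ind _ P (fun b => f (grmul (uline X) b) = grmul (f (uline X)) (f b)) b sb).
  + by rewrite grmul0r f0 grmul0r.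
  + by move=> b1 b2 h1 h2; rewrite grmulDr fD h1 h2 fD grmulDr.
  by move=> Y l YP; rewrite grmulZr fZ fZ grmulZr fM1.
- apply/ffunP => z; rewrite ffunE !ulineE !inE /s.
  suff -> : ((z ^+ pinv gT q)%g == 1%g) = (z == 1%g) by [].
  apply/eqP/eqP => [h|->]; last by rewrite expg1n.
  by rewrite -(powKV copq z) h expg1n.
Qed.
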